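(* Let $H$ be a $d\times d$ Hermitian matrix with exactly $K$ distinct eigenvalues $\lambda_1,\dots,\lambda_K$, and let $\mathcal{L}=i\,\mathrm{ad}_H$, i.e. $\mathcal{L}(\rho)=i[H,\rho]$. Then there exist a Hermitian-preserving trace-preserving (HPTP) linear map $\mathcal{P}$ from operators on $\mathbb{C}^d\otimes\mathbb{C}^K$ to operators on $\mathbb{C}^d$ and a family of program states $(\pi_t)_{t\ge0}$ on $\mathbb{C}^K$ such that $\mathcal{P}(\rho\otimes\pi_t)=e^{t\mathcal{L}}(\rho)$ for all $t\ge0$ and all $\rho$; that is, $\mathcal{L}$ can be exactly programmed by a quasi-sampling protocol with program states of dimension $K$.
   Context: $\mathrm{ad}_H=[H,\cdot]$. A quasi-sampling (quasi-quantum) programming protocol is a pair consisting of an HPTP retrieval map $\mathcal{P}$ and program states $\pi_t$ with $\mathcal{P}(\cdot\otimes\pi_t)=e^{t\mathcal{L}}$; HPTP maps are implemented in expectation by quasi-probability sampling of CPTP maps. *)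

(* Defs.v *)
From HB Require Import structures.
From mathcomp Require Import all_boot all_order all_algebra.
From mathcomp Require Import complex mxtens.
From mathcomp Require Import all_classical all_reals topology normedtype sequences.
Set Implicit Arguments. Unset Strict Implicit. Unset Printing Implicit Defensive.
Import Order.TTheory GRing.Theory Num.Theory.
Import numFieldNormedType.Exports.
Local Open Scope ring_scope.
Local Open Scope complex_scope.
Local Open Scope classical_set_scope.

Definition adjmx {R : rcfType} m n (A : 'M[R[i]]_(m, n)) : 'M[R[i]]_(n, m) :=
  \matrix_(i, j) (A j i)^*.

Definition hermmx {R : rcfType} n (A : 'M[R[i]]_n) : Prop := adjmx A = A.

Definition psdmx {R : rcfType} n (A : 'M[R[i]]_n) : Prop :=
  hermmx A /\ forall v : 'cV[R[i]]_n, 0 <= (adjmx v *m A *m v) 0 0.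

Definition density_mx {R : rcfType} n (A : 'M[R[i]]_n) : Prop :=
  psdmx A /\ \tr A = 1.

Definition num_distinct_eigenvalues {R : rcfType} n (H : 'M[R[i]]_n) (K : nat) : Prop :=
  exists s : seq R[i], [/\ uniq s, size s = K & forall a, eigenvalue H a <-> a \in s].

Definition iadH {R : rcfType} n (H : 'M[R[i]]_n) (rho : 'M[R[i]]_n) : 'M[R[i]]_n :=
  'i *: (H *m rho - rho *m H).

Definition expL_partial {R : rcfType} n (L : 'M[R[i]]_n -> 'M[R[i]]_n) (t : R)
  (rho : 'M[R[i]]_n) (N : nat) : 'M[R[i]]_n :=
  \sum_(k < N) ((t ^+ k / (k`!)%:R)%:C *: iter k L rho).

Definition mx_cvg_to {R : realType} m n (u : nat -> 'M[R[i]]_(m, n)) (l : 'M[R[i]]_(m, n)) : Prop :=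
  forall i j, ((fun N => complex.Re (u N i j) : R) @ \oo --> (complex.Re (l i j) : R)) /\
              ((fun N => complex.Im (u N i j) : R) @ \oo --> (complex.Im (l i j) : R)).

Definition is_expL {R : realType} n (L : 'M[R[i]]_n -> 'M[R[i]]_n) (t : R)
  (rho X : 'M[R[i]]_n) : Prop :=
  mx_cvg_to (expL_partial L t rho) X.

Definition HPTP {R : rcfType} m n (P : 'M[R[i]]_m -> 'M[R[i]]_n) : Prop :=
  (forall X, hermmx X -> hermmx (P X)) /\ (forall X, \tr (P X) = \tr X).

(* Main.v *)
Require Import Defs.
From HB Require Import structures.
From mathcomp Require Import all_boot all_order all_algebra.
From mathcomp Require Import complex mxtens.
From mathcomp Require Import all_classical all_reals topology normedtype sequences.
From mathcomp Require Import spectral sesquilinear trigo.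
From mathcomp Require Import ring lra.
Import Order.TTheory GRing.Theory Num.Theory.
Import numFieldNormedType.Exports.
Local Open Scope ring_scope.
Local Open Scope complex_scope.
Set Implicit Arguments. Unset Strict Implicit. Unset Printing Implicit Defensive.
Section Gen.
Variable R : realType.
Local Notation C := R[i].

Lemma adjmxK m n (A : 'M[C]_(m, n)) : adjmx (adjmx A) = A.
Proof. by apply/matrixP => i j; rewrite !mxE; exact: conjCK. Qed.

Lemma adjmxM m n p (A : 'M[C]_(m, n)) (B : 'M[C]_(n, p)) :
  adjmx (A *m B) = adjmx B *m adjmx A.
Proof.
apply/matrixP => i j; rewrite !mxE rmorph_sum; apply: eq_bigr => k _.
by rewrite !mxE rmorphM mulrC.
Qed.

Lemma adjmxD m n (A B : 'M[C]_(m, n)) : adjmx (A + B) = adjmx A + adjmx B.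
Proof. by apply/matrixP => i j; rewrite !mxE rmorphD. Qed.

Lemma adjmxZ m n c (A : 'M[C]_(m, n)) : adjmx (c *: A) = Num.conj c *: adjmx A.
Proof. by apply/matrixP => i j; rewrite !mxE rmorphM. Qed.

Lemma adjmx_sum m n I (r : seq I) (P : pred I) (F : I -> 'M[C]_(m, n)) :
  adjmx (\sum_(i <- r | P i) F i) = \sum_(i <- r | P i) adjmx (F i).
Proof.
elim/big_rec2: _ => [|i x y _ <-]; last by rewrite adjmxD.
by apply/matrixP => i j; rewrite !mxE rmorph0.
Qed.

Lemma adjmx_tr n (A : 'M[C]_n) : \tr (adjmx A) = Num.conj (\tr A).
Proof. by rewrite /mxtrace rmorph_sum; apply: eq_bigr => i _; rewrite mxE. Qed.

Lemma adjmx_delta n (i j : 'I_n) : adjmx (delta_mx i j : 'M[C]_n) = delta_mx j i.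
Proof.
apply/matrixP => a b; rewrite !mxE.
by rewrite rmorph_nat andbC.
Qed.

Lemma adjmx_diag n (f : 'rV[C]_n) : adjmx (diag_mx f) = diag_mx (\row_i Num.conj (f 0 i)).
Proof.
apply/matrixP => a b; rewrite !mxE eq_sym.
have [->|] := eqVneq b a; first by rewrite !mulr1n.
by move=> _; rewrite !mulr0n rmorph0.
Qed.

End Gen.
Section Spec.
Variables (R : realType) (d : nat) (H : 'M[R[i]]_d) (hH : hermmx H).
Local Notation C := R[i].
Local Notation U := (spectralmx H).
Local Notation Dg := (spectral_diag H).
Local Notation Vs := (invmx (spectralmx H)).

Lemma Hherm : H \is hermsymmx.
Proof.
apply/is_hermitianmxP; rewrite expr0 scale1r.
by rewrite -[LHS]hH; apply/matrixP => i j; rewrite !mxE.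
Qed.

Lemma H_spec : H = Vs *m diag_mx Dg *m U.
Proof. exact/orthomx_spectralP/hermitian_normalmx/Hherm. Qed.

Lemma UVs : U *m Vs = 1%:M.
Proof. exact/mulmxV/spectral_unit. Qed.
Lemma VsU : Vs *m U = 1%:M.
Proof. exact/mulVmx/spectral_unit. Qed.

Lemma adjU : adjmx U = Vs.
Proof.
rewrite invmx_unitary ?spectral_unitarymx //.
by apply/matrixP => i j; rewrite !mxE.
Qed.
Lemma adjVs : adjmx Vs = U.
Proof. by rewrite -adjU adjmxK. Qed.

Lemma Dreal i : Dg 0 i = (complex.Re (Dg 0 i))%:C.
Proof.
have /mxOverP/(_ 0 i) := hermitian_spectral_diag_real Hherm.
by move=> /RRe_real ->.
Qed.

Definition mxf (f : 'I_d -> C) := Vs *m diag_mx (\row_i f i) *m U.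

Lemma diag_mxMM (f g : 'rV[C]_d) : diag_mx f *m diag_mx g = diag_mx (\row_i (f 0 i * g 0 i)).
Proof.
apply/matrixP => a b; rewrite mul_diag_mx !mxE.
have [->|] := eqVneq a b; first by rewrite !mulr1n.
by move=> _; rewrite !mulr0n mulr0.
Qed.

Lemma mxfM f g : mxf f *m mxf g = mxf (fun i => f i * g i).
Proof.
rewrite /mxf !mulmxA -(mulmxA _ U Vs) UVs mulmx1.
rewrite -(mulmxA Vs) diag_mxMM.
rewrite (_ : \row_i _ = \row_i (f i * g i)) //.
by apply/matrixP => a b; rewrite !mxE.
Qed.

Lemma mxf1 : mxf (fun _ => 1) = 1%:M.
Proof.
rewrite /mxf (_ : diag_mx _ = 1%:M) ?mulmx1 ?VsU //.
by apply/matrixP => a b; rewrite !mxE eq_sym.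
Qed.

Lemma mxf_sum I (r : seq I) (F : I -> 'I_d -> C) :
  \sum_(a <- r) mxf (F a) = mxf (fun i => \sum_(a <- r) F a i).
Proof.
rewrite /mxf -mulmx_suml -mulmx_sumr.
rewrite (_ : \sum_(a <- r) _ = diag_mx (\row_i (\sum_(a <- r) F a i))) //.
apply/matrixP => a b; rewrite !mxE.
elim/big_rec2: _ => [|k x y _ IH]; first by rewrite !mxE mul0rn.
by rewrite !mxE IH mulrnDl.
Qed.

Lemma mxfZ c f : c *: mxf f = mxf (fun i => c * f i).
Proof.
rewrite /mxf scalemxAl scalemxAr.
rewrite (_ : c *: diag_mx _ = diag_mx (\row_i (c * f i))) //.
by apply/matrixP => a b; rewrite !mxE mulrnAr.
Qed.

Lemma mxf_adj f : adjmx (mxf f) = mxf (fun i => Num.conj (f i)).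
Proof.
rewrite /mxf !adjmxM adjU adjVs adjmx_diag mulmxA.
rewrite (_ : \row_i _ = \row_i Num.conj (f i) ) //.
by apply/matrixP => a b; rewrite !mxE.
Qed.

Lemma H_mxf : H = mxf (fun i => Dg 0 i).
Proof.
rewrite {1}H_spec /mxf.
rewrite (_ : \row_i (Dg 0 i) = Dg) //.
by apply/matrixP => a b; rewrite !mxE ord1.
Qed.

Lemma Dg_eigen i : eigenvalue H (Dg 0 i).
Proof.
apply/eigenvalueP; exists (delta_mx 0 i *m U).
  rewrite [X in _ *m X]H_spec !mulmxA -(mulmxA _ U Vs) UVs mulmx1 scalemxAl; congr (_ *m _).
  apply/matrixP => a b; rewrite mul_mx_diag !mxE ord1 eqxx /=.
  by have [->|] := eqVneq b i; rewrite ?mulr1 ?mulr0 ?mul1r ?mul0r.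
apply/negP => /eqP h.
have := congr1 (mulmx^~ Vs) h; rewrite /= mul0mx -mulmxA UVs mulmx1 => /matrixP /(_ 0 i); rewrite !mxE !eqxx /=.
by move/eqP; rewrite oner_eq0.
Qed.

End Spec.
Section Proj.
Variables (R : realType) (d : nat) (H : 'M[R[i]]_d) (hH : hermmx H).
Variables (s : seq R[i]) (K : nat) (us : uniq s) (ss : size s = K)
  (hs : forall a, eigenvalue H a <-> a \in s).
Local Notation C := R[i].
Local Notation Dg := (spectral_diag H).

Definition Pj (a : 'I_K) := mxf H (fun i => ((Dg 0 i == s`_a) : nat)%:R).
Definition ell (a : 'I_K) : C := (complex.Re s`_a)%:C.

Lemma nth_inj (a b : 'I_K) : s`_a = s`_b -> a = b.
Proof.
move=> h; apply/val_inj/eqP; rewrite -(nth_uniq 0 _ _ us) ?ss ?ltn_ord //.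
by apply/eqP.
Qed.

Lemma Pj_sum : \sum_a Pj a = 1%:M.
Proof.
rewrite mxf_sum -(mxf1 H); congr mxf; apply: funext => i.
have : Dg 0 i \in s by apply/hs/Dg_eigen.
move=> Ds; have Hidx : (index (Dg 0%R i) s < K)%N by rewrite -ss index_mem.
rewrite (bigD1 (Ordinal Hidx)) //= nth_index // eqxx big1 ?addr0 //.
move=> a /negbTE ne; case: eqP => // h; exfalso.
have : a = Ordinal Hidx by apply: nth_inj; rewrite /= nth_index.
by move=> e; rewrite e eqxx in ne.
Qed.

Lemma Pj_mul a b : Pj a *m Pj b = ((a == b) : nat)%:R *: Pj a.
Proof.
rewrite /Pj mxfM mxfZ; congr mxf; apply: funext => i.
have [<-|ne] := eqVneq a b; first by rewrite mul1r; case: eqP => _; rewrite ?mulr1 ?mulr0.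
rewrite mul0r; case: eqP => h1; case: eqP => h2 //=; rewrite ?mul0r ?mulr0 //.
by exfalso; move/eqP: ne; apply; apply: nth_inj; rewrite -h1 -h2.
Qed.

Lemma Pj_adj a : adjmx (Pj a) = Pj a.
Proof. by rewrite /Pj mxf_adj; congr mxf; apply: funext => i; rewrite rmorph_nat. Qed.

Lemma HPj a : H *m Pj a = ell a *: Pj a.
Proof.
rewrite [X in X *m _](H_mxf hH) /Pj mxfM mxfZ; congr mxf; apply: funext => i.
case: eqP => h; rewrite ?mulr0 ?mulr1 //.
by rewrite /ell -h -Dreal.
Qed.

Lemma PjH a : Pj a *m H = ell a *: Pj a.
Proof.
rewrite [X in _ *m X](H_mxf hH) /Pj mxfM mxfZ; congr mxf; apply: funext => i.
case: eqP => h; rewrite ?mul0r ?mulr0 ?mul1r ?mulr1 //.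
by rewrite /ell -h -Dreal.
Qed.

Lemma K_gt0 : (0 < d)%N -> (0 < K)%N.
Proof.
move=> hd; have : Dg 0 (Ordinal hd) \in s by apply/hs/Dg_eigen.
by rewrite -ss; case: (s).
Qed.

End Proj.
Section Prog.
Variables (R : realType) (d K : nat) (Pi : 'I_K -> 'M[R[i]]_d) (i0 : 'I_d).
Local Notation C := R[i].

Definition blk (a b : 'I_K) (X : 'M[C]_(d * K)) : 'M[C]_d :=
  \matrix_(i, j) X (mxtens_index (i, a)) (mxtens_index (j, b)).

Definition P0 (X : 'M[C]_(d * K)) : 'M[C]_d :=
  \sum_a \sum_b (K%:R : C) *: (Pi a *m blk a b X *m Pi b).

Definition Pf (X : 'M[C]_(d * K)) : 'M[C]_d :=
  P0 X + (\tr X - \tr (P0 X)) *: delta_mx i0 i0.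

Lemma blk_lin a b c X Y : blk a b (c *: X + Y) = c *: blk a b X + blk a b Y.
Proof. by apply/matrixP => i j; rewrite !mxE. Qed.

Lemma P0_lin c X Y : P0 (c *: X + Y) = c *: P0 X + P0 Y.
Proof.
rewrite /P0 scaler_sumr -big_split; apply: eq_bigr => a _.
rewrite scaler_sumr -big_split; apply: eq_bigr => b _.
rewrite blk_lin mulmxDr mulmxDl -scalemxAr -scalemxAl scalerDr !scalerA mulrC.
done.
Qed.

Lemma Pf_lin : linear Pf.
Proof.
move=> c X Y; rewrite /Pf P0_lin !mxtraceD !mxtraceZ.
rewrite scalerDr scalerA addrACA -scalerDl; congr (_ + _ *: _).
by rewrite mulrBr opprD addrACA.
Qed.

Lemma blk_adj a b X : adjmx (blk a b X) = blk b a (adjmx X).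
Proof. by apply/matrixP => i j; rewrite !mxE. Qed.

Lemma P0_adj X : (forall a, adjmx (Pi a) = Pi a) -> adjmx (P0 X) = P0 (adjmx X).
Proof.
move=> hPi; rewrite /P0 adjmx_sum exchange_big /=; apply: eq_bigr => b _.
rewrite adjmx_sum; apply: eq_bigr => a _.
by rewrite adjmxZ rmorph_nat !adjmxM blk_adj !hPi mulmxA.
Qed.

Lemma Pf_adj X : (forall a, adjmx (Pi a) = Pi a) -> adjmx (Pf X) = Pf (adjmx X).
Proof.
move=> hPi; rewrite /Pf adjmxD adjmxZ adjmx_delta P0_adj //.
rewrite -(P0_adj X hPi) !adjmx_tr.
by rewrite (rmorphB Num.conj).
Qed.

Lemma tr_delta : \tr (delta_mx i0 i0 : 'M[C]_d) = 1.
Proof.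
rewrite /mxtrace (bigD1 i0) //= mxE !eqxx big1 ?addr0 // => k /negbTE.
by rewrite mxE eq_sym => ->.
Qed.

Lemma Pf_tr X : \tr (Pf X) = \tr X.
Proof. by rewrite /Pf mxtraceD mxtraceZ tr_delta mulr1 addrC subrK. Qed.

Lemma blk_tens a b (rho : 'M[C]_d) (pi : 'M[C]_K) : blk a b (rho *t pi) = pi a b *: rho.
Proof. by apply/matrixP => i j; rewrite [LHS]mxE tensmxE [RHS]mxE mulrC. Qed.

Lemma tr_tens (rho : 'M[C]_d) (pi : 'M[C]_K) : \tr (rho *t pi) = \tr rho * \tr pi.
Proof. by rewrite /mxtrace mulr_sum; apply: eq_bigr => k _; rewrite !mxE. Qed.

Lemma P0_tens (rho : 'M[C]_d) (pi : 'M[C]_K) :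
  P0 (rho *t pi) = \sum_a \sum_b ((K%:R * pi a b) *: (Pi a *m rho *m Pi b)).
Proof.
apply: eq_bigr => a _; apply: eq_bigr => b _.
by rewrite blk_tens -scalemxAr -scalemxAl scalerA.
Qed.

End Prog.
Local Open Scope classical_set_scope.
Section Scal.
Variable R : realType.
Local Notation C := R[i].
Local Notation Re := complex.Re.
Local Notation Im := complex.Im.

Lemma ReD (x y : C) : Re (x + y) = Re x + Re y. Proof. by case: x; case: y. Qed.
Lemma ImD (x y : C) : Im (x + y) = Im x + Im y. Proof. by case: x; case: y. Qed.
Lemma ReM (x y : C) : Re (x * y) = Re x * Re y - Im x * Im y. Proof. by case: x; case: y. Qed.
Lemma ImM (x y : C) : Im (x * y) = Re x * Im y + Im x * Re y. Proof. by case: x; case: y. Qed.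

Lemma Re_sum I (r : seq I) (F : I -> C) : Re (\sum_(i <- r) F i) = \sum_(i <- r) Re (F i).
Proof. by elim/big_rec2: _ => // i x y _ <-; rewrite ReD. Qed.
Lemma Im_sum I (r : seq I) (F : I -> C) : Im (\sum_(i <- r) F i) = \sum_(i <- r) Im (F i).
Proof. by elim/big_rec2: _ => // i x y _ <-; rewrite ImD. Qed.

Lemma iX_even m : ('i : C) ^+ (m.*2) = ((-1) ^+ m)%:C.
Proof. by rewrite -mul2n exprM sqr_i rmorphXn rmorphN1. Qed.

Lemma ReXi k (x : R) : Re ('i ^+ k * x%:C) = (~~ odd k)%:R * (-1) ^+ k./2 * x.
Proof.
have hk := esym (odd_double_half k); move: (odd k) (k./2) hk => b m ->.
case: b => /=.
  rewrite add1n exprS iX_even /=; ring.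
by rewrite add0n iX_even -rmorphM ?odd_double ?doubleK /= mul1r.
Qed.

Lemma ImXi k (x : R) : Im ('i ^+ k * x%:C) = (odd k)%:R * (-1) ^+ k.-1./2 * x.
Proof.
have hk := esym (odd_double_half k); move: (odd k) (k./2) hk => b m ->.
case: b => /=.
  rewrite add1n exprS iX_even /= ?odd_double ?doubleK /=; ring.
by rewrite add0n iX_even -rmorphM ?odd_double /= !mul0r.
Qed.

Definition expT (t del : R) (k : nat) : C :=
  (t ^+ k / k`!%:R)%:C * ('i * del%:C) ^+ k.

Lemma expT_E t del k : expT t del k = 'i ^+ k * ((t * del) ^+ k / k`!%:R)%:C.
Proof.
rewrite /expT exprMn -rmorphXn mulrC -mulrA -rmorphM.
have -> : (t * del) ^+ k / k`!%:R = del ^+ k * (t ^+ k / k`!%:R) by rewrite exprMn; ring.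
by [].
Qed.

Lemma Re_expT t del k : Re (expT t del k) = cos_coeff (t * del) k.
Proof. by rewrite expT_E ReXi /cos_coeff /= !mulrA. Qed.
Lemma Im_expT t del k : Im (expT t del k) = sin_coeff (t * del) k.
Proof. by rewrite expT_E ImXi /sin_coeff /= !mulrA. Qed.

Lemma cvg_Re_expT t del :
  (fun N => Re (\sum_(k < N) expT t del k)) @ \oo --> cos (t * del).
Proof.
have -> : (fun N => Re (\sum_(k < N) expT t del k)) = series (cos_coeff (t * del)).
  apply: funext => N; rewrite /series /= Re_sum big_mkord.
  by apply: eq_bigr => k _; rewrite Re_expT.
rewrite unlock; exact: is_cvg_series_cos_coeff.
Qed.

Lemma cvg_Im_expT t del :
  (fun N => Im (\sum_(k < N) expT t del k)) @ \oo --> sin (t * del).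
Proof.
have -> : (fun N => Im (\sum_(k < N) expT t del k)) = series (sin_coeff (t * del)).
  apply: funext => N; rewrite /series /= Im_sum big_mkord.
  by apply: eq_bigr => k _; rewrite Im_expT.
rewrite unlock; exact: is_cvg_series_sin_coeff.
Qed.

End Scal.
Section Cvg.
Variable R : realType.
Local Notation C := R[i].
Local Notation Re := complex.Re.
Local Notation Im := complex.Im.

Definition ccvg (u : nat -> C) (l : C) :=
  ((fun N => Re (u N)) @ \oo --> Re l) /\ ((fun N => Im (u N)) @ \oo --> Im l).

Lemma ccvg_sum I (r : seq I) (F : I -> nat -> C) (l : I -> C) :
  (forall a, ccvg (F a) (l a)) ->
  ccvg (fun N => \sum_(a <- r) F a N) (\sum_(a <- r) l a).
Proof.
move=> h; elim: r => [|a r [IH1 IH2]].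
  split.
    have -> : (fun N => Re (\sum_(j <- [::]) F j N)) = (fun N => 0).
      by apply: funext => N; rewrite big_nil.
    by rewrite big_nil; exact: cvg_cst.
  have -> : (fun N => Im (\sum_(j <- [::]) F j N)) = (fun N => 0).
    by apply: funext => N; rewrite big_nil.
  by rewrite big_nil; exact: cvg_cst.
split.
  have -> : (fun N => Re (\sum_(j <- a :: r) F j N)) =
            (fun N => Re (F a N) + Re (\sum_(j <- r) F j N)).
    by apply: funext => N; rewrite big_cons ReD.
  rewrite big_cons ReD; exact: (cvgD (h a).1 IH1).
have -> : (fun N => Im (\sum_(j <- a :: r) F j N)) =
          (fun N => Im (F a N) + Im (\sum_(j <- r) F j N)).
  by apply: funext => N; rewrite big_cons ImD.
rewrite big_cons ImD; exact: (cvgD (h a).2 IH2).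
Qed.

Lemma ccvg_mulr (u : nat -> C) l c : ccvg u l -> ccvg (fun N => u N * c) (l * c).
Proof.
move=> [h1 h2]; split.
  have -> : (fun N => Re (u N * c)) = (fun N => Re (u N) * Re c - Im (u N) * Im c).
    by apply: funext => N; rewrite ReM.
  rewrite ReM; exact: (cvgB (cvgMr_tmp (b := Re c) h1) (cvgMr_tmp (b := Im c) h2)).
have -> : (fun N => Im (u N * c)) = (fun N => Re (u N) * Im c + Im (u N) * Re c).
  by apply: funext => N; rewrite ImM.
rewrite ImM; exact: (cvgD (cvgMr_tmp (b := Im c) h1) (cvgMr_tmp (b := Re c) h2)).
Qed.

Lemma ccvg_expT t del : ccvg (fun N => \sum_(k < N) expT t del k)
   (cos (t * del) +i* sin (t * del)).
Proof. by split; [exact: cvg_Re_expT | exact: cvg_Im_expT]. Qed.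

End Cvg.
HB.instance Definition _ (R : realType) d K (Pi : 'I_K -> 'M[R[i]]_d) i0 :=
  GRing.isLinear.Build _ _ _ _ (Pf Pi i0) (Pf_lin Pi i0).

Section Main.
Variable R : realType.
Local Notation C := R[i].
Local Notation Re := complex.Re.
Local Notation Im := complex.Im.

Lemma complex_ext (x y : C) : Re x = Re y -> Im x = Im y -> x = y.
Proof. by case: x => a b; case: y => c e /= -> ->. Qed.

Lemma conjE (x : C) : Num.conj x = conjc x. Proof. by []. Qed.

Definition cexp (th : R) : C := cos th +i* sin th.

Lemma cexp_norm th : Num.conj (cexp th) * cexp th = 1.
Proof.
apply: complex_ext; rewrite conjE ?ReM ?ImM /=.
  by rewrite mulNr opprK -!expr2 cos2Dsin2.
by rewrite mulNr mulrC subrr.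
Qed.

Lemma cexpB a b : cexp a * Num.conj (cexp b) = cexp (a - b).
Proof.
apply: complex_ext; rewrite conjE ?ReM ?ImM /= ?cosB ?sinB; ring.
Qed.

Lemma cexp0 : cexp 0 = 1.
Proof. by apply: complex_ext; rewrite /= ?cos0 ?sin0. Qed.

Variables (d : nat) (H : 'M[C]_d) (hH : hermmx H).
Variables (s : seq C) (K : nat) (us : uniq s) (ss : size s = K)
  (hs : forall a, eigenvalue H a <-> a \in s).

Local Notation Pi := (fun a : 'I_K => Pj H s a).
Definition rr (a : 'I_K) : R := Re s`_a.

Definition wv (t : R) : 'cV[C]_K := \col_a cexp (t * rr a).
Definition pit (t : R) : 'M[C]_K := (K%:R : C)^-1 *: (wv t *m adjmx (wv t)).

Lemma pit_E t a b : pit t a b = (K%:R)^-1 * (cexp (t * rr a) * Num.conj (cexp (t * rr b))).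
Proof. by rewrite !mxE big_ord1 !mxE. Qed.

Lemma Kneq0 : (0 < d)%N -> (K%:R : C) != 0.
Proof. by move=> hd; rewrite pnatr_eq0 -lt0n (K_gt0 hH ss hs hd). Qed.

Lemma pit_density t : (0 < d)%N -> density_mx (pit t).
Proof.
move=> hd; split; first split.
- rewrite /hermmx /pit adjmxZ adjmxM adjmxK fmorphV rmorph_nat //.
- move=> v; rewrite /pit -scalemxAr -scalemxAl mulmxA mxE.
  rewrite -(mulmxA (adjmx v *m wv t)).
  have -> : adjmx (wv t) *m v = adjmx (adjmx v *m wv t) by rewrite adjmxM adjmxK.
  set y := adjmx v *m wv t.
  rewrite mxE big_ord1 [adjmx y _ _]mxE.
  apply: mulr_ge0; first by rewrite invr_ge0 ler0n.
  exact: mul_conjC_ge0.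
rewrite /pit mxtraceZ mxtrace_mulC /mxtrace big_ord1 mxE.
rewrite (eq_bigr (fun _ => 1)); last by move=> a _; rewrite !mxE cexp_norm.
by rewrite sumr_const card_ord mulVf ?Kneq0.
Qed.

End Main.
Section Main2.
Variable R : realType.
Local Notation C := R[i].
Variables (d K : nat) (H : 'M[C]_d) (Pi : 'I_K -> 'M[C]_d) (l : 'I_K -> R).
Hypothesis HPi : forall a, H *m Pi a = (l a)%:C *: Pi a.
Hypothesis PiH : forall a, Pi a *m H = (l a)%:C *: Pi a.
Hypothesis Pi_sum : \sum_a Pi a = 1%:M.

Definition Mab (rho : 'M[C]_d) (a b : 'I_K) := Pi a *m rho *m Pi b.

Lemma iadH_add A B : iadH H (A + B) = iadH H A + iadH H B.
Proof. by rewrite /iadH mulmxDr mulmxDl opprD addrACA scalerDr. Qed.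
Lemma iadH_scale c A : iadH H (c *: A) = c *: iadH H A.
Proof. by rewrite /iadH -scalemxAr -scalemxAl -scalerBr !scalerA mulrC. Qed.
Lemma iadH_sum I (r : seq I) (F : I -> 'M[C]_d) :
  iadH H (\sum_(i <- r) F i) = \sum_(i <- r) iadH H (F i).
Proof.
elim/big_rec2: _ => [|i x y _ <-]; last by rewrite iadH_add.
by rewrite /iadH mulmx0 mul0mx subrr scaler0.
Qed.

Lemma iadH_M rho a b : iadH H (Mab rho a b) = ('i * ((l a)%:C - (l b)%:C)) *: Mab rho a b.
Proof.
rewrite /iadH /Mab !mulmxA HPi -!mulmxA PiH.
by rewrite -!scalemxAl -scalemxAr -scalemxAr mulmxA -scalerBl scalerA.
Qed.

Lemma rho_dec rho : rho = \sum_a \sum_b Mab rho a b.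
Proof.
rewrite /Mab.
have -> : \sum_a \sum_b (Pi a *m rho *m Pi b) = (\sum_a Pi a) *m rho *m (\sum_b Pi b).
  rewrite !mulmx_suml; apply: eq_bigr => a _; rewrite mulmx_sumr //.
by rewrite Pi_sum mul1mx mulmx1.
Qed.

Lemma iter_dec k rho : iter k (iadH H) rho =
  \sum_a \sum_b ('i * ((l a)%:C - (l b)%:C)) ^+ k *: Mab rho a b.
Proof.
elim: k => [|k IH] /=.
  rewrite {1}(rho_dec rho); apply: eq_bigr => a _; apply: eq_bigr => b _.
  by rewrite expr0 scale1r.
rewrite IH iadH_sum; apply: eq_bigr => a _; rewrite iadH_sum; apply: eq_bigr => b _.
by rewrite iadH_scale iadH_M scalerA exprSr.
Qed.

Lemma expL_dec t rho N : expL_partial (iadH H) t rho N =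
  \sum_a \sum_b (\sum_(k < N) expT t (l a - l b) k) *: Mab rho a b.
Proof.
rewrite /expL_partial.
under eq_bigr do rewrite iter_dec scaler_sumr.
rewrite exchange_big /=; apply: eq_bigr => a _.
under eq_bigr do rewrite scaler_sumr.
rewrite exchange_big /=; apply: eq_bigr => b _.
rewrite scaler_suml; apply: eq_bigr => k _.
by rewrite scalerA /expT rmorphB.
Qed.

Lemma tr_sum I (r : seq I) (F : I -> 'M[C]_d) : \tr (\sum_(i <- r) F i) = \sum_(i <- r) \tr (F i).
Proof. by elim/big_rec2: _ => [|i x y _ <-]; rewrite ?mxtrace0 ?mxtraceD. Qed.

Hypothesis Pi_mul : forall a b, Pi a *m Pi b = ((a == b) : nat)%:R *: Pi a.

Lemma Pf_prod_gen (i0 : 'I_d) (rho : 'M[C]_d) (pi : 'M[C]_K) (E : 'I_K -> 'I_K -> C) :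
  (forall a b, K%:R * pi a b = E a b) -> (forall a, E a a = 1) -> \tr pi = 1 ->
  Pf Pi i0 (rho *t pi) = \sum_a \sum_b E a b *: Mab rho a b.
Proof.
move=> hE hE1 htr.
have tr1 : \tr (rho *t pi) = \tr (P0 Pi (rho *t pi)).
  rewrite tr_tens htr mulr1 P0_tens tr_sum.
  under eq_bigr => a _.
    rewrite tr_sum (bigD1 a) //= big1; last first.
      move=> b /negbTE nb; rewrite mxtraceZ mxtrace_mulC mulmxA Pi_mul nb.
      by rewrite scale0r mul0mx mxtrace0 mulr0.
    rewrite mxtraceZ mxtrace_mulC mulmxA Pi_mul eqxx /= mulr1n scale1r addr0 hE hE1 mul1r.
  over.
  by rewrite -tr_sum -mulmx_suml Pi_sum mul1mx.
rewrite /Pf tr1 subrr scale0r addr0 P0_tens.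
by apply: eq_bigr => a _; apply: eq_bigr => b _; rewrite hE.
Qed.

End Main2.
Local Close Scope classical_set_scope.
Unset Implicit Arguments.
Theorem proposition3 (R : realType) (d K : nat) (hd : (0 < d)%N)
  (H : 'M[R[i]]_d) (hH : hermmx H) (hK : num_distinct_eigenvalues H K) :
  exists (P : {linear 'M[R[i]]_(d * K) -> 'M[R[i]]_d}) (pi : R -> 'M[R[i]]_K),
    HPTP P /\
    (forall t : R, 0 <= t -> density_mx (pi t)) /\
    (forall (t : R) (rho : 'M[R[i]]_d), 0 <= t ->
       is_expL (iadH H) t rho (P (rho *t pi t))).
Proof.
case: hK => s [us ss hs].
pose i0 : 'I_d := Ordinal hd.
pose Pi := fun a : 'I_K => Pj H s a.
have HPi : forall a, H *m Pi a = (rr s a)%:C *: Pi a by move=> a; exact: HPj.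
have PiH : forall a, Pi a *m H = (rr s a)%:C *: Pi a by move=> a; exact: PjH.
have Pi_sum : \sum_a Pi a = 1%:M by exact: (Pj_sum hH us ss hs).
have Pi_mul : forall a b, Pi a *m Pi b = ((a == b) : nat)%:R *: Pi a.
  by move=> a b; exact: (Pj_mul H us ss).
have Pi_adj : forall a, adjmx (Pi a) = Pi a by move=> a; exact: Pj_adj.
pose P : {linear 'M[R[i]]_(d * K) -> 'M[R[i]]_d} := GRing.Linear.clone _ _ _ _ (Pf Pi i0) _.
have PE : forall X, P X = Pf Pi i0 X by [].
exists P, (fun t => pit s K t).
split; [split|split].
- move=> X hX; rewrite /hermmx PE.
  have := Pf_adj i0 X Pi_adj. 
  by rewrite hX.
- by move=> X; rewrite PE; exact: Pf_tr.
- by move=> t _; exact: (pit_density hH ss hs).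
move=> t rho _.
rewrite PE.
have -> : Pf Pi i0 (rho *t pit s K t) =
   \sum_a \sum_b cexp (t * (rr s a - rr s b)) *: Mab Pi rho a b.
  apply: Pf_prod_gen => //.
  - by move=> a b; rewrite pit_E mulrA mulfV ?(Kneq0 hH ss hs) // mul1r cexpB mulrBr.
  - by move=> a; rewrite subrr mulr0 cexp0.
  - by case: (pit_density hH ss hs t hd).
rewrite /is_expL /mx_cvg_to => i j.
have -> : expL_partial (iadH H) t rho =
   fun N => \sum_a \sum_b (\sum_(k < N) expT t (rr s a - rr s b) k) *: Mab Pi rho a b.
  by apply: funext => N; exact: expL_dec.
change (ccvg (fun N => (\sum_a \sum_b (\sum_(k < N) expT t (rr s a - rr s b) k) *: Mab Pi rho a b) i j)
  ((\sum_a \sum_b cexp (t * (rr s a - rr s b)) *: Mab Pi rho a b) i j)).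
have -> : (fun N => (\sum_a \sum_b (\sum_(k < N) expT t (rr s a - rr s b) k) *: Mab Pi rho a b) i j)
  = (fun N => \sum_a \sum_b (\sum_(k < N) expT t (rr s a - rr s b) k) * Mab Pi rho a b i j).
  apply: funext => N; rewrite summxE; apply: eq_bigr => a _.
  by rewrite summxE; apply: eq_bigr => b _; rewrite mxE.
rewrite summxE (eq_bigr (fun a => \sum_b cexp (t * (rr s a - rr s b)) * Mab Pi rho a b i j)); last first.
  by move=> a _; rewrite summxE; apply: eq_bigr => b _; rewrite mxE.
apply: ccvg_sum => a; apply: ccvg_sum => b; apply: ccvg_mulr; exact: ccvg_expT.
Qed.
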